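(* Let $\beta \in \mathcal{P}$ and $\alpha \in E$ satisfy $\alpha^{q+1} = \beta^q + \beta^{q^2+q+1}$. Then the equation $X^{q+1} + \alpha X + \beta = 0$ has $q+1$ roots in $E$, and all of them lie in $\mathcal{P}$.
   Context: Let $q = 2^m$ with $m \ge 1$, and let $E = \mathbb{F}_{q^4}$. Define $\mathcal{P} = \{x \in E \mid x^{q^3+q^2+q+1} = 1\}$. *)

(* Defs.v *)
From HB Require Import structures.
From mathcomp Require Import all_boot all_order all_algebra all_field.
Set Implicit Arguments. Unset Strict Implicit. Unset Printing Implicit Defensive.
Import GRing.Theory.
Local Open Scope ring_scope.

Definition Pset (E : finFieldType) (q : nat) : {set E} :=
  [set x : E | x ^+ (q ^ 3 + q ^ 2 + q + 1)%N == 1].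

Definition rootsE (E : finFieldType) (q : nat) (a b : E) : {set E} :=
  [set x : E | x ^+ q.+1 + a * x + b == 0].

(* Main.v *)
From HB Require Import structures.
From mathcomp Require Import all_boot all_order all_algebra all_field.
From mathcomp Require Import ring zify.
Require Import Defs.
Import GRing.Theory.
Local Open Scope ring_scope.

Lemma card_roots_le (F : finFieldType) n k j (a b : F) : (k < n)%N -> (j < n)%N ->
  leq #|[set x : F | x ^+ n + a * x ^+ k + b * x ^+ j == 0]| n.
Proof.
move=> kn jn.
set p : {poly F} := 'X^n + a *: 'X^k + b *: 'X^j.
have sp : size p = n.+1.
  rewrite /p -addrA size_polyDl size_polyXn //.
  apply: leq_ltn_trans (size_polyD _ _) _; rewrite gtn_max.
  by rewrite !(leq_ltn_trans (size_scale_leq _ _)) // size_polyXn ltnS.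
have p0 : p != 0 by rewrite -size_poly_eq0 sp.
set A := [set x : F | _].
have H := max_poly_roots p0 (rs := enum A).
rewrite cardE -ltnS -sp; apply: H; last exact: enum_uniq.
apply/allP => x; rewrite mem_enum inE rootE /p !hornerE.
by []. Qed.

Lemma nat1 (q : nat) : (1 <= q)%N -> ((q - 1) * q.+1).+1 = (q ^ 2)%N.
Proof. move=> h. case: q h => // n _. rewrite subn1 /=. nia. Qed.

Lemma nat2 (q : nat) : (1 <= q)%N -> ((q - 1) * (q ^ 3 + q ^ 2 + q + 1)).+1 = (q ^ 4)%N.
Proof. move=> h. case: q h => // n _. rewrite subn1 /=. nia. Qed.

Theorem lemma2p3 (m : nat) (E : finFieldType) (q : nat) (alpha beta : E) :
  (1 <= m)%N -> q = (2 ^ m)%N -> #|E| = (q ^ 4)%N ->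
  beta \in Pset E q ->
  alpha ^+ q.+1 = beta ^+ q + beta ^+ (q ^ 2 + q + 1)%N ->
  #|rootsE q alpha beta| = q.+1 /\ rootsE q alpha beta \subset Pset E q.
Proof.
move=> m1 hq cE hb ha.
have q1 : (1 <= q)%N by rewrite hq expn_gt0.
have q2 : (2 <= q)%N.
  rewrite hq; case: (m) m1 => // m' _; rewrite expnS; have := expn_gt0 2 m'; lia.
have ch2 : 2 \in [pchar E].
  by apply: (card_finPcharP (n := (m * 4)%N)) => //; rewrite cE hq expnM.
have frD (x y : E) : (x + y) ^+ q = x ^+ q + y ^+ q.
  rewrite GRing.exprDn_pchar // (eq_pnat _ (pcharf_eq ch2)) hq pnatX pnat_id //.
have fr2 (x : E) : x ^+ (q ^ 2) = (x ^+ q) ^+ q by rewrite expnS expn1 exprM.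
have fr3 (x : E) : x ^+ (q ^ 3) = ((x ^+ q) ^+ q) ^+ q by rewrite expnS exprM fr2.
have fr4 (x : E) : x ^+ (q ^ 4) = (((x ^+ q) ^+ q) ^+ q) ^+ q by rewrite expnS exprM fr3.
have expE (x : E) : (((x ^+ q) ^+ q) ^+ q) ^+ q = x by rewrite -fr4 -cE expf_card.
have hN : beta * beta ^+ q * (beta ^+ q) ^+ q * ((beta ^+ q) ^+ q) ^+ q = 1.
  move: hb; rewrite inE => /eqP hb; rewrite -[RHS]hb !exprD expr1 fr3 fr2; ring.
have hA1 : alpha * alpha ^+ q = beta ^+ q + beta * beta ^+ q * (beta ^+ q) ^+ q.
  by rewrite -exprS ha !exprD expr1 fr2; ring.
have hA2 : alpha ^+ q * (alpha ^+ q) ^+ q = (beta ^+ q) ^+ q +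
   beta ^+ q * (beta ^+ q) ^+ q * ((beta ^+ q) ^+ q) ^+ q.
  by have := congr1 (fun x => x ^+ q) hA1; rewrite /= exprMn frD !exprMn.
pose Lf (z : E) := (z ^+ q) ^+ q + alpha * z ^+ q + beta * z.
have LfD (x y : E) : Lf (x + y) = Lf x + Lf y by rewrite /Lf !frD; ring.
set A1 := alpha ^+ q in hA1 hA2 *.
set A2 := A1 ^+ q in hA2 *.
set B1 := beta ^+ q in hN hA1 hA2 *.
set B2 := B1 ^+ q in hN hA1 hA2 *.
set B3 := B2 ^+ q in hN hA1 hA2 *.
pose c0 := A2 * A1 - B2.
have c0b : c0 * beta = 1.
  rewrite /c0 (mulrC A2) hA2 -[RHS]hN; ring.
have coef1 : alpha * A1 * A2 - alpha * B2 - A2 * B1 = 0.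
  have [A10|A1n0] := eqVneq A1 0.
    have a0 : alpha = 0 by move/eqP: A10; rewrite /A1 expf_eq0 => /andP[_ /eqP].
    have A20 : A2 = 0 by rewrite /A2 A10 expr0n eqn0Ngt q1.
    by rewrite A20 a0; ring.
  apply: (mulfI A1n0); rewrite mulr0.
  transitivity ((alpha * A1) * (A1 * A2) - (alpha * A1) * B2 - (A1 * A2) * B1).
    by ring.
  rewrite hA1 hA2.
  transitivity (B1 * B2 * (beta * B1 * B2 * B3) - B1 * B2); first by ring.
  by rewrite hN mulr1 subrr.
pose Qf (u : E) := (u ^+ q) ^+ q + (- A2) * u ^+ q + c0 * u.
have key (z : E) : Qf (Lf z) = 0.
  rewrite /Qf /Lf !frD !exprMn expE.
  transitivity (z + (alpha * A1 * A2 - alpha * B2 - A2 * B1) * z ^+ q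
     + (c0 * beta) * z); first by rewrite /c0 -/A1 -/A2 -/B1 -/B2; ring.
  by rewrite coef1 c0b mul0r addr0 mul1r addrr_pchar2.
pose V := [set z : E | Lf z == 0].
pose I := [set Lf z | z : E].
have qq2 : (q < q ^ 2)%N by rewrite expnS expn1; nia.
have hI : (#|I| <= q ^ 2)%N.
  apply: leq_trans (subset_leq_card _) (@card_roots_le E (q ^ 2) q 1 (- A2) c0 qq2 _).
    apply/subsetP => u /imsetP [z _ ->]; rewrite inE fr2 expr1.
    by apply/eqP; exact: key.
  by rewrite expnS expn1; nia.
pose s u := odflt 0 [pick z | Lf z == u].
have hs u : u \in I -> Lf (s u) = u.
  move=> /imsetP [z _ ->]; rewrite /s; case: pickP => [w /eqP -> //| H] /=.
  by move: (H z); rewrite eqxx.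
have hE : (q ^ 4 <= #|I| * #|V|)%N.
  rewrite -cE -cardsT -cardsX.
  apply: leq_trans (subset_leq_card _) (leq_imset_card (fun p => s p.1 + p.2) _).
  apply/subsetP => z _; apply/imsetP; exists (Lf z, z - s (Lf z)); last first.
    by rewrite /= addrC subrK.
  have LI : Lf z \in I by apply/imsetP; exists z.
  by rewrite in_setX /= LI inE (GRing.subr_pchar2 ch2) LfD hs // /= (GRing.addrr_pchar2 ch2) eqxx.
have hV : (q ^ 2 <= #|V|)%N.
  have := leq_trans hE (leq_mul hI (leqnn #|V|)).
  by rewrite (_ : (q ^ 4 = q ^ 2 * q ^ 2)%N) ?leq_pmul2l ?expn_gt0 ?q1 // -expnD.
have V0 : 0 \in V.
  have h0 : (0:E) ^+ q = 0 by rewrite expr0n eqn0Ngt q1.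
  by rewrite inE /Lf !h0 !mulr0 !addr0.
pose S := [set z ^+ (q - 1) | z in V :\ 0].
pose r x := odflt 0 [pick z in V :\ 0 | z ^+ (q - 1) == x].
pose C := [set c : E | c ^+ (q - 1) == 1].
have qm1 : (0 < q - 1)%N by rewrite subn_gt0.
have hC : (#|C| <= q - 1)%N.
  apply: leq_trans (subset_leq_card _) (@card_roots_le E (q - 1) 0 0 (-1) 0 qm1 qm1).
  by apply/subsetP => x; rewrite !inE expr0 mulN1r mul0r addr0 subr_eq0.
have hV' : (#|V :\ (0:E)%R| <= #|S| * #|C|)%N.
  rewrite -cardsX.
  apply: leq_trans (subset_leq_card _) (leq_imset_card (fun p => r p.1 * p.2) _).
  apply/subsetP => z zV; apply/imsetP.
  have [w [wV wz rz]] : exists w,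
      [/\ w \in V :\ 0, w ^+ (q - 1) = z ^+ (q - 1) & r (z ^+ (q - 1)) = w].
    rewrite /r; case: pickP => [w /andP[wV /eqP wz] | H] /=; first by exists w.
    by move: (H z); rewrite zV eqxx.
  have w0 : w != 0 by move: wV; rewrite in_setD1 => /andP[].
  exists (z ^+ (q - 1), z / w); last by rewrite /= rz mulrC divfK.
  rewrite in_setX /=; apply/andP; split; first by apply/imsetP; exists z.
  by rewrite inE expr_div_n -wz divff // expf_neq0.
have hR : (#|rootsE q alpha beta| <= q.+1)%N.
  apply: leq_trans (subset_leq_card _) (@card_roots_le E q.+1 1 0 alpha beta q1 (ltn0Sn q)).
  by apply/subsetP => x; rewrite !inE expr1 expr0 mulr1.
have hS : (q.+1 <= #|S|)%N.
  have h1 : ((q - 1) * q.+1 <= #|S| * (q - 1))%N.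
    apply: leq_trans _ (leq_trans hV' (leq_mul (leqnn _) hC)).
    have := cardsD1 0 V; rewrite V0 /= add1n => hVc.
    by rewrite -ltnS nat1 // -hVc.
  by rewrite mulnC leq_pmul2r in h1.
have SR : S \subset rootsE q alpha beta.
  apply/subsetP => x /imsetP [z zV ->].
  have z0 : z != 0 by move: zV; rewrite in_setD1 => /andP[].
  have zL : Lf z = 0 by move: zV; rewrite in_setD1 inE => /andP[_ /eqP].
  have E1 : z ^+ q = z * z ^+ (q - 1) by rewrite -exprS subn1 prednK.
  have E2 : (z ^+ q) ^+ q = z * (z ^+ (q - 1)) ^+ q.+1.
    by rewrite -fr2 -(nat1 q q1) exprS exprM.
  rewrite inE; apply/eqP; apply: (mulfI z0); rewrite mulr0 -[RHS]zL /Lf E2 E1; ring.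
have SP : S \subset Pset E q.
  apply/subsetP => x /imsetP [z zV ->].
  have z0 : z != 0 by move: zV; rewrite in_setD1 => /andP[].
  rewrite inE -exprM; apply/eqP; apply: (mulfI z0).
  by rewrite mulr1 -exprS nat2 // fr4 expE.
have eqSR : S = rootsE q alpha beta.
  apply/eqP; rewrite eqEcard SR /=; exact: leq_trans hR hS.
split; last by rewrite -eqSR.
by apply/eqP; rewrite eqn_leq hR -eqSR hS.
Qed.
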